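(* The four $3$-Sylow subgroups of $Fr(162\times 4)$ are $\mathcal S_3(F)$, $V_2\mathcal S_3(F)V_2^{-1}$, $V_3\mathcal S_3(F)V_3^{-1}$ and $V_4\mathcal S_3(F)V_4^{-1}$, and these four subgroups are pairwise distinct.
   Context: Let $\omega=e^{2i\pi/3}$, $J$ the $3\times3$ antidiagonal matrix with antidiagonal entries $1$. $G_1=\mathrm{diag}(e^{7i\pi/9},-e^{4i\pi/9},-e^{7i\pi/9})$, $G_2=\begin{pmatrix}-\tfrac12 e^{4i\pi/9}&\tfrac{1}{\sqrt2}e^{7i\pi/9}&\tfrac12 e^{4i\pi/9}\\ \tfrac{1}{\sqrt2}e^{7i\pi/9}&0&\tfrac{1}{\sqrt2}e^{7i\pi/9}\\ \tfrac12 e^{4i\pi/9}&\tfrac{1}{\sqrt2}e^{7i\pi/9}&-\tfrac12 e^{4i\pi/9}\end{pmatrix}$, $FUM=-\omega J$, $Fr(162\times 4)=\langle G_1,G_2,FUM\rangle$ (order $648$). $A=G_1G_2^2G_1^{-1}$, $B=G_1G_2^{-2}G_1$, $\mathcal N=\langle A,B\rangle$, $H_3=\begin{pmatrix}\frac12&\frac1{\sqrt2}&-\frac12\\\frac1{\sqrt2}&0&\frac1{\sqrt2}\\\frac12&-\frac1{\sqrt2}&-\frac12\end{pmatrix}$, $\mathcal S_3(F)=\mathcal N\cup\mathcal N H_3\cup\mathcal N H_3^2$ (the unique $3$-Sylow subgroup of $\langle G_1,G_2\rangle$). $V_2=(FUM)^3=-J$, $V_3=G_1(FUM)^3G_1^{-1}=\begin{pmatrix}0&0&1\\0&-1&0\\1&0&0\end{pmatrix}$,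 $V_4=V_3V_2=\mathrm{diag}(-1,1,-1)$, $\mathcal V=\{I_3,V_2,V_3,V_4\}$. *)

(* Defs.v *)
From HB Require Import structures.
From mathcomp Require Import all_boot all_order all_algebra all_field.
Set Implicit Arguments. Unset Strict Implicit. Unset Printing Implicit Defensive.
Import Order.TTheory GRing.Theory Num.Theory.
Local Open Scope ring_scope.

Notation M3 := 'M[algC]_3.

(* zeta = e^{i pi/9}: the 9th root of -1 with minimal nonnegative argument *)
Definition zeta : algC := 9.-root (-1).
Definition omega : algC := zeta ^+ 6.
Definition e7 : algC := zeta ^+ 7.
Definition e4 : algC := zeta ^+ 4.
Definition isq2 : algC := (sqrtC 2)^-1.
Definition half : algC := 2^-1.

Definition mx3 (a b c d e f g h k : algC) : M3 :=
  \matrix_(i < 3, j < 3)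
    nth 0 (nth [::] [:: [:: a; b; c]; [:: d; e; f]; [:: g; h; k]] i) j.

Definition Jmx : M3 := mx3 0 0 1 0 1 0 1 0 0.
Definition G1 : M3 := mx3 e7 0 0  0 (- e4) 0  0 0 (- e7).
Definition G2 : M3 :=
  mx3 (- (half * e4)) (isq2 * e7) (half * e4)
      (isq2 * e7) 0 (isq2 * e7)
      (half * e4) (isq2 * e7) (- (half * e4)).
Definition FUM : M3 := - (omega *: Jmx).
Definition A : M3 := G1 * G2 ^+ 2 * G1^-1.
Definition B : M3 := G1 * (G2 ^+ 2)^-1 * G1.
Definition H3 : M3 :=
  mx3 half isq2 (- half)  isq2 0 isq2  half (- isq2) (- half).
Definition V2 : M3 := FUM ^+ 3.
Definition V3 : M3 := G1 * FUM ^+ 3 * G1^-1.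
Definition V4 : M3 := V3 * V2.

Inductive gen (S : seq M3) : M3 -> Prop :=
| gen1 : gen S 1
| genM g x : g \in S -> gen S x -> gen S (g * x)
| genV g x : g \in S -> gen S x -> gen S (g^-1 * x).

Definition Fr : M3 -> Prop := gen [:: G1; G2; FUM].
Definition Ngrp : M3 -> Prop := gen [:: A; B].
Definition S3F (x : M3) : Prop :=
  exists2 n, Ngrp n & [\/ x = n, x = n * H3 | x = n * H3 ^+ 2].

Definition conjset (V : M3) (P : M3 -> Prop) (x : M3) : Prop :=
  exists2 s, P s & x = V * s * V^-1.

Definition same_set (P Q : M3 -> Prop) : Prop := forall x, P x <-> Q x.

Definition has_card (P : M3 -> Prop) (n : nat) : Prop :=
  exists s : seq M3, [/\ uniq s, size s = n & forall x, P x <-> x \in s].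

Definition is_subgroup_of (G H : M3 -> Prop) : Prop :=
  [/\ forall x, H x -> G x, H 1,
      forall x y, H x -> H y -> H (x * y) & forall x, H x -> H x^-1].

Definition is_Sylow (p : nat) (G H : M3 -> Prop) : Prop :=
  is_subgroup_of G H /\
  exists nG nH, [/\ has_card G nG, has_card H nH & nH = (nG`_p)%N].

Definition four_sylows (i : 'I_4) : M3 -> Prop :=
  match val i with
  | 0 => S3F
  | 1 => conjset V2 S3F
  | 2 => conjset V3 S3F
  | _ => conjset V4 S3F
  end.

(* Main.v *)
Require Import Defs.
From Stdlib Require Import ZArith.
From HB Require Import structures.
From mathcomp Require Import all_boot all_order all_algebra all_field.
From mathcomp Require Import all_fingroup all_solvable.
From mathcomp Require Import ssrZ ring.
Set Implicit Arguments. Unset Strict Implicit. Unset Printing Implicit Defensive.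


Section Comp.
Local Open Scope Z_scope.
Definition V6 := (Z * Z * Z * Z * Z * Z)%type.
Definition Kc := (V6 * V6 * nat)%type.
Definition vadd (a b : V6) : V6 :=
  let: (a0,a1,a2,a3,a4,a5) := a in let: (b0,b1,b2,b3,b4,b5) := b in
  (a0+b0,a1+b1,a2+b2,a3+b3,a4+b4,a5+b5).
Definition vscale (n : Z) (a : V6) : V6 :=
  let: (a0,a1,a2,a3,a4,a5) := a in (n*a0,n*a1,n*a2,n*a3,n*a4,n*a5).
Definition vmul (a b : V6) : V6 :=
  let: (a0,a1,a2,a3,a4,a5) := a in let: (b0,b1,b2,b3,b4,b5) := b in
  let c0 := a0*b0 in
  let c1 := a0*b1 + a1*b0 in
  let c2 := a0*b2 + a1*b1 + a2*b0 in
  let c3 := a0*b3 + a1*b2 + a2*b1 + a3*b0 in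
  let c4 := a0*b4 + a1*b3 + a2*b2 + a3*b1 + a4*b0 in
  let c5 := a0*b5 + a1*b4 + a2*b3 + a3*b2 + a4*b1 + a5*b0 in
  let c6 := a1*b5 + a2*b4 + a3*b3 + a4*b2 + a5*b1 in
  let c7 := a2*b5 + a3*b4 + a4*b3 + a5*b2 in
  let c8 := a3*b5 + a4*b4 + a5*b3 in
  let c9 := a4*b5 + a5*b4 in
  let c10 := a5*b5 in
  (c0 - c6 - c9, c1 - c7 - c10, c2 - c8, c3 + c6, c4 + c7, c5 + c8).
Definition veven (a : V6) : bool :=
  let: (a0,a1,a2,a3,a4,a5) := a in
  [&& Z.even a0, Z.even a1, Z.even a2, Z.even a3, Z.even a4 & Z.even a5].
Definition vhalf (a : V6) : V6 :=
  let: (a0,a1,a2,a3,a4,a5) := a in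
  (Z.div2 a0,Z.div2 a1,Z.div2 a2,Z.div2 a3,Z.div2 a4,Z.div2 a5).
Fixpoint knorm_rec (f : nat) (a b : V6) (k : nat) : Kc :=
  match f, k with
  | S f', S k' => if veven a && veven b then knorm_rec f' (vhalf a) (vhalf b) k'
                  else (a,b,k)
  | _, _ => (a,b,k)
  end.
Definition knorm (x : Kc) : Kc := let: (a,b,k) := x in knorm_rec k a b k.
Definition kmul (x y : Kc) : Kc :=
  let: (a,b,k) := x in let: (a',b',k') := y in
  knorm (vadd (vmul a a') (vscale 2 (vmul b b')), vadd (vmul a b') (vmul b a'), (k + k')%N).
Definition p2 (k : nat) : Z := Z.pow 2 (Z.of_nat k).
Definition kadd (x y : Kc) : Kc :=
  let: (a,b,k) := x in let: (a',b',k') := y in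
  knorm (vadd (vscale (p2 k') a) (vscale (p2 k) a'),
         vadd (vscale (p2 k') b) (vscale (p2 k) b'), (k + k')%N).
Definition v0 : V6 := (0,0,0,0,0,0).
Definition v1 : V6 := (1,0,0,0,0,0).
Definition vzeta : V6 := (0,1,0,0,0,0).
Definition vz (n : nat) : V6 := iter n (vmul vzeta) v1.
Definition k0 : Kc := (v0, v0, 0%N).
Definition k1 : Kc := (v1, v0, 0%N).
Definition kneg (x : Kc) : Kc := let: (a,b,k) := x in (vscale (-1) a, vscale (-1) b, k).
Definition ksub (x y : Kc) : Kc := kadd x (kneg y).
Definition veqb (a b : V6) : bool :=
  let: (a0,a1,a2,a3,a4,a5) := a in let: (b0,b1,b2,b3,b4,b5) := b in
  [&& Z.eqb a0 b0, Z.eqb a1 b1, Z.eqb a2 b2, Z.eqb a3 b3, Z.eqb a4 b4 & Z.eqb a5 b5].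
Definition keqb (x y : Kc) : bool :=
  let: (a,b,k) := x in let: (a',b',k') := y in [&& veqb a a', veqb b b' & Nat.eqb k k'].
Definition M3c := (Kc*Kc*Kc*Kc*Kc*Kc*Kc*Kc*Kc)%type.
Definition meqb (X Y : M3c) : bool :=
  let: (x11,x12,x13,x21,x22,x23,x31,x32,x33) := X in
  let: (y11,y12,y13,y21,y22,y23,y31,y32,y33) := Y in
  [&& keqb x11 y11, keqb x12 y12, keqb x13 y13, keqb x21 y21, keqb x22 y22,
      keqb x23 y23, keqb x31 y31, keqb x32 y32 & keqb x33 y33].
Fixpoint memc (x : M3c) (l : seq M3c) : bool :=
  match l with [::] => false | y :: l' => meqb x y || memc x l' end.
Fixpoint memk (x : Kc) (l : seq Kc) : bool :=
  match l with [::] => false | y :: l' => keqb x y || memk x l' end.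
Definition kent (e : Kc -> Kc -> Kc -> Kc -> Kc -> Kc -> Kc) := e.
Definition mmul (X Y : M3c) : M3c :=
  let: (x11,x12,x13,x21,x22,x23,x31,x32,x33) := X in
  let: (y11,y12,y13,y21,y22,y23,y31,y32,y33) := Y in
  let e a b c d e f := kadd (kadd (kadd k0 (kmul a b)) (kmul c d)) (kmul e f) in
  (e x11 y11 x12 y21 x13 y31, e x11 y12 x12 y22 x13 y32, e x11 y13 x12 y23 x13 y33,
   e x21 y11 x22 y21 x23 y31, e x21 y12 x22 y22 x23 y32, e x21 y13 x22 y23 x23 y33,
   e x31 y11 x32 y21 x33 y31, e x31 y12 x32 y22 x33 y32, e x31 y13 x32 y23 x33 y33).
Definition mentries (X : M3c) : seq Kc :=
  let: (x11,x12,x13,x21,x22,x23,x31,x32,x33) := X in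
  [:: x11; x12; x13; x21; x22; x23; x31; x32; x33].
Definition Ic : M3c := (k1,k0,k0,k0,k1,k0,k0,k0,k1).
Definition e7c : Kc := (vz 7, v0, 0%N).
Definition e4c : Kc := (vz 4, v0, 0%N).
Definition G1c : M3c := (e7c,k0,k0, k0,kneg e4c,k0, k0,k0,kneg e7c).
Definition he4 : Kc := (vz 4, v0, 1%N).
Definition se7 : Kc := (v0, vz 7, 1%N).
Definition G2c : M3c := (kneg he4, se7, he4, se7, k0, se7, he4, se7, kneg he4).
Definition omc : Kc := (vz 6, v0, 0%N).
Definition FUMc : M3c := (k0,k0,kneg omc, k0,kneg omc,k0, kneg omc,k0,k0).
Definition halfc : Kc := (v1, v0, 1%N).
Definition isq2c : Kc := (v0, v1, 1%N).
Definition H3c : M3c :=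
  (halfc, isq2c, kneg halfc, isq2c, k0, isq2c, halfc, kneg isq2c, kneg halfc).

Definition khash (x : Kc) : Z :=
  let: (a,b,k) := x in let: (a0,a1,a2,a3,a4,a5) := a in let: (b0,b1,b2,b3,b4,b5) := b in
  a0 + 3*a1 + 7*a2 + 13*a3 + 29*a4 + 53*a5 + 97*b0 + 193*b1 + 389*b2 + 769*b3
  + 1543*b4 + 3079*b5 + 6151 * Z.of_nat k.
Definition mkey (X : M3c) : nat :=
  let: (x11,x12,x13,x21,x22,x23,x31,x32,x33) := X in
  Z.to_nat (Z.modulo (khash x11 + 31 * khash x12 + 37 * khash x13 + 41 * khash x21
     + 43 * khash x22 + 47 * khash x23 + 59 * khash x31 + 61 * khash x32
     + 67 * khash x33) 251).
Definition nbins : nat := 251%N.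
Definition bins (l : seq M3c) : seq (seq M3c) :=
  foldr (fun x B => set_nth [::] B (mkey x) (x :: nth [::] B (mkey x))) (nseq nbins [::]) l.
Definition memh (x : M3c) (B : seq (seq M3c)) : bool := memc x (nth [::] B (mkey x)).

Fixpoint addnew (c acc : seq M3c) (B : seq (seq M3c)) (new : seq M3c) :=
  match c with
  | [::] => (acc, B, new)
  | x :: c' => if memh x B then addnew c' acc B new
               else addnew c' (x :: acc) (set_nth [::] B (mkey x) (x :: nth [::] B (mkey x))) (x :: new)
  end.
Definition bstep (gs : seq M3c) (st : seq M3c * seq (seq M3c) * seq M3c) :=
  let: (acc, B, fr) := st in addnew [seq mmul g x | g <- gs, x <- fr] acc B [::].
Definition bfs (gs : seq M3c) (n : nat) : seq M3c :=
  (iter n (bstep gs) ([:: Ic], bins [:: Ic], [:: Ic])).1.1.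

Fixpoint uniqc (l : seq M3c) : bool :=
  match l with [::] => true | x :: l' => ~~ memc x l' && uniqc l' end.
Definition findinv (X : M3c) (l : seq M3c) : M3c := head Ic [seq h <- l | meqb (mmul X h) Ic].

(* Galois conjugates to certify non-zeroness *)
Definition ztab : seq V6 := Eval vm_compute in [seq vz i | i <- iota 0 18].
Definition vzt (n : nat) : V6 := nth v0 ztab (n %% 18).
Definition vsubst (j : nat) (a : V6) : V6 :=
  let: (a0,a1,a2,a3,a4,a5) := a in
  vadd (vscale a0 v1) (vadd (vscale a1 (vzt j)) (vadd (vscale a2 (vzt (2*j)))
   (vadd (vscale a3 (vzt (3*j))) (vadd (vscale a4 (vzt (4*j))) (vscale a5 (vzt (5*j))))))).
Definition ksig (j : nat) (s : Z) (x : Kc) : Kc :=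
  let: (a,b,k) := x in (vsubst j a, vscale s (vsubst j b), k).
Definition sigs : seq (nat * Z) :=
  [:: (1%N,-1); (5%N,1); (5%N,-1); (7%N,1); (7%N,-1); (11%N,1); (11%N,-1);
      (13%N,1); (13%N,-1); (17%N,1); (17%N,-1)].
Definition conjprod (x : Kc) : Kc := foldr (fun js acc => kmul (ksig js.1 js.2 x) acc) k1 sigs.
Definition isratnz (x : Kc) : bool :=
  let: (a,b,k) := x in let: (a0,a1,a2,a3,a4,a5) := a in
  [&& ~~ Z.eqb a0 0, Z.eqb a1 0, Z.eqb a2 0, Z.eqb a3 0, Z.eqb a4 0, Z.eqb a5 0 & veqb b v0].
Definition nzcert (x : Kc) : bool := isratnz (kmul x (conjprod x)).

Fixpoint kundup (l acc : seq Kc) : seq Kc :=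
  match l with [::] => acc | x :: l' => kundup l' (if memk x acc then acc else x :: acc) end.
End Comp.

Definition gsF := [:: G1c; G2c; FUMc].
Definition Lc := Eval vm_compute in bfs gsF 11.

Definition BL := Eval vm_compute in bins Lc.
Definition G1ic := Eval vm_compute in findinv G1c Lc.
Definition G2ic := Eval vm_compute in findinv G2c Lc.
Definition FUMic := Eval vm_compute in findinv FUMc Lc.
Definition Vs := Eval vm_compute in kundup (flatten (map mentries Lc)) [::].

Fixpoint allpairs_lt (l : seq Kc) : bool :=
  match l with [::] => true | v :: l' => all (fun w => nzcert (ksub v w)) l' && allpairs_lt l' end.

Definition G2sqc := mmul G2c G2c.
Definition G2sqic := Eval vm_compute in findinv G2sqc Lc.
Definition Ac := mmul (mmul G1c G2sqc) G1ic.
Definition Bc := mmul (mmul G1c G2sqic) G1c.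
Definition Aic := Eval vm_compute in findinv Ac Lc.
Definition Bic := Eval vm_compute in findinv Bc Lc.
Definition gsN := [:: Ac; Bc].
Definition Nc := Eval vm_compute in bfs gsN 10.


Definition H3sqc := mmul H3c H3c.
Definition S3c := Eval vm_compute in [seq mmul n h | n <- Nc, h <- [:: Ic; H3c; H3sqc]].



Definition V2c := mmul FUMc (mmul FUMc FUMc).
Definition V3c := mmul (mmul G1c V2c) G1ic.
Definition V4c := mmul V3c V2c.
Definition V2ic := Eval vm_compute in findinv V2c Lc.
Definition V3ic := Eval vm_compute in findinv V3c Lc.
Definition V4ic := Eval vm_compute in findinv V4c Lc.
Definition P1c := Eval vm_compute in [seq mmul (mmul V2c s) V2ic | s <- S3c].
Definition P2c := Eval vm_compute in [seq mmul (mmul V3c s) V3ic | s <- S3c].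
Definition P3c := Eval vm_compute in [seq mmul (mmul V4c s) V4ic | s <- S3c].




Lemma Lc_eq : Lc = bfs gsF 11. Proof. by vm_compute. Qed.
Lemma BL_eq : BL = bins Lc. Proof. by vm_compute. Qed.
Lemma chkF : all (fun x => all (fun g => memh (mmul g x) BL)
   [:: G1c; G2c; FUMc; G1ic; G2ic; FUMic]) Lc. Proof. by vm_compute. Qed.
Lemma chkU : uniqc Lc. Proof. by vm_compute. Qed.
Lemma chkV : all (fun x => all (fun e => memk e Vs) (mentries x)) Lc. Proof. by vm_compute. Qed.
Lemma chkNZ : allpairs_lt Vs. Proof. by vm_compute. Qed.
Lemma chkInv : [&& meqb (mmul V2c V2ic) Ic, meqb (mmul V3c V3ic) Ic, meqb (mmul V4c V4ic) Ic,
   meqb (mmul G1c G1ic) Ic, meqb (mmul G2c G2ic) Ic, meqb (mmul FUMc FUMic) Ic,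
   meqb (mmul G2sqc G2sqic) Ic, meqb (mmul Ac Aic) Ic & meqb (mmul Bc Bic) Ic].
Proof. by vm_compute. Qed.
Lemma Nc_eq : Nc = bfs gsN 10. Proof. by vm_compute. Qed.
Lemma chkN : all (fun x => all (fun g => memc (mmul g x) Nc) [:: Ac; Bc; Aic; Bic]) Nc.
Proof. by vm_compute. Qed.
Lemma S3c_eq : S3c = [seq mmul n h | n <- Nc, h <- [:: Ic; H3c; H3sqc]].
Proof. by vm_compute. Qed.
Lemma chkS3a : [&& uniqc S3c, size S3c == 81 & all (fun x => memh x BL) S3c].
Proof. by vm_compute. Qed.
Lemma chkS3m : all (fun x => all (fun y => memc (mmul x y) S3c) S3c) S3c.
Proof. by vm_compute. Qed.
Lemma chkS3i : all (fun x => has (fun y => meqb (mmul x y) Ic) S3c) S3c.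
Proof. by vm_compute. Qed.
Lemma P1c_eq : P1c = [seq mmul (mmul V2c s) V2ic | s <- S3c]. Proof. by vm_compute. Qed.
Lemma P2c_eq : P2c = [seq mmul (mmul V3c s) V3ic | s <- S3c]. Proof. by vm_compute. Qed.
Lemma P3c_eq : P3c = [seq mmul (mmul V4c s) V4ic | s <- S3c]. Proof. by vm_compute. Qed.
Lemma chkP : [&& has (fun x => ~~ memc x P1c) S3c, has (fun x => ~~ memc x P2c) S3c,
  has (fun x => ~~ memc x P3c) S3c, has (fun x => ~~ memc x P2c) P1c,
  has (fun x => ~~ memc x P3c) P1c, has (fun x => ~~ memc x P3c) P2c,
  all (fun x => memh x BL) P1c, all (fun x => memh x BL) P2c & all (fun x => memh x BL) P3c].
Proof. by vm_compute. Qed.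

Import Order.TTheory GRing.Theory Num.Theory.
Open Scope ring_scope.

Definition phiZ (n : Z) : algC := (int_of_Z n)%:~R.
Lemma phiZ_add a b : phiZ (Z.add a b) = phiZ a + phiZ b.
Proof. by rewrite /phiZ (raddfD int_of_Z a b) intrD. Qed.
Lemma phiZ_mul a b : phiZ (Z.mul a b) = phiZ a * phiZ b.
Proof. by rewrite /phiZ (rmorphM int_of_Z a b) intrM. Qed.
Lemma phiZ_opp a : phiZ (Z.opp a) = - phiZ a.
Proof. by rewrite /phiZ (raddfN int_of_Z a) intrN. Qed.
Lemma phiZ_sub a b : phiZ (Z.sub a b) = phiZ a - phiZ b.
Proof. by rewrite -Z.add_opp_r phiZ_add phiZ_opp. Qed.
Lemma phiZ0 : phiZ Z0 = 0. Proof. by []. Qed.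
Lemma phiZ1 : phiZ (Zpos xH) = 1. Proof. by rewrite /phiZ /= . Qed.
Lemma phiZ2 : phiZ (Zpos (xO xH)) = 2. Proof. by rewrite /phiZ /= . Qed.
Lemma phiZm1 : phiZ (Zneg xH) = -1. Proof. by rewrite /phiZ /=. Qed.
Lemma phiZ_p2 k : phiZ (p2 k) = 2 ^+ k.
Proof.
rewrite /p2; elim: k => [|k IH]; first by rewrite expr0 phiZ1.
rewrite Nat2Z.inj_succ Z.pow_succ_r; last exact: Zle_0_nat.
by rewrite phiZ_mul IH phiZ2 exprS.
Qed.
Lemma phiZ_half n : Z.even n -> phiZ n = 2 * phiZ (Z.div2 n).
Proof.
move=> ev; rewrite {1}(Z.div2_odd n) -Z.negb_even ev Z.add_0_r phiZ_mul phiZ2 //.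
Qed.
Lemma phiZ_inj0 n : phiZ n = 0 -> n = Z0.
Proof. by rewrite /phiZ => /eqP; rewrite intr_eq0 => /eqP h; rewrite -(int_of_ZK n) h. Qed.

Section EvalV.
Variable r : algC.
Hypothesis hr : r ^+ 6 = r ^+ 3 - 1.

Definition evalV (a : V6) : algC :=
  let: (a0,a1,a2,a3,a4,a5) := a in
  phiZ a0 + phiZ a1 * r + phiZ a2 * r ^+ 2 + phiZ a3 * r ^+ 3 + phiZ a4 * r ^+ 4
  + phiZ a5 * r ^+ 5.

Lemma evalV_add a b : evalV (vadd a b) = evalV a + evalV b.
Proof.
case: a => [[[[[a0 a1] a2] a3] a4] a5]; case: b => [[[[[b0 b1] b2] b3] b4] b5].
rewrite /= !phiZ_add; ring.
Qed.

Lemma evalV_scale n a : evalV (vscale n a) = phiZ n * evalV a.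
Proof.
case: a => [[[[[a0 a1] a2] a3] a4] a5]; rewrite /= !phiZ_mul; ring.
Qed.

Lemma evalV_mul a b : evalV (vmul a b) = evalV a * evalV b.
Proof.
have Phi0 : r ^+ 6 - r ^+ 3 + 1 = 0 by rewrite hr; ring.
case: a => [[[[[a0 a1] a2] a3] a4] a5]; case: b => [[[[[b0 b1] b2] b3] b4] b5].
rewrite /vmul /evalV !(phiZ_add, phiZ_sub, phiZ_mul).
set A0 := phiZ a0; set A1 := phiZ a1; set A2 := phiZ a2; set A3 := phiZ a3;
set A4 := phiZ a4; set A5 := phiZ a5.
set B0 := phiZ b0; set B1 := phiZ b1; set B2 := phiZ b2; set B3 := phiZ b3;
set B4 := phiZ b4; set B5 := phiZ b5.
set c6 := A1*B5 + A2*B4 + A3*B3 + A4*B2 + A5*B1.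
set c7 := A2*B5 + A3*B4 + A4*B3 + A5*B2.
set c8 := A3*B5 + A4*B4 + A5*B3.
set c9 := A4*B5 + A5*B4.
set c10 := A5*B5.
rewrite -[X in X = _]addr0 -(mul0r (c6 + c7 * r + c8 * r ^+ 2 + c9 * (r ^+ 3 + 1)
   + c10 * r * (r ^+ 3 + 1))) -Phi0 /c6 /c7 /c8 /c9 /c10.
ring.
Qed.

Lemma evalV_half a : veven a -> evalV a = 2 * evalV (vhalf a).
Proof.
case: a => [[[[[a0 a1] a2] a3] a4] a5] /= /andP[e0 /andP[e1 /andP[e2 /andP[e3 /andP[e4 e5]]]]].
rewrite (phiZ_half e0) (phiZ_half e1) (phiZ_half e2) (phiZ_half e3) (phiZ_half e4)
  (phiZ_half e5); ring.
Qed.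

Lemma evalV_v0 : evalV v0 = 0.
Proof. rewrite /= !phiZ0; ring. Qed.
Lemma evalV_v1 : evalV v1 = 1.
Proof. rewrite /= !phiZ0 phiZ1; ring. Qed.
Lemma evalV_vz n : evalV (vz n) = r ^+ n.
Proof.
elim: n => [|n IH]; first by rewrite expr0; exact: evalV_v1.
rewrite /vz iterS -/(vz n) evalV_mul IH exprS; congr (_ * _).
rewrite /= !phiZ0 phiZ1; ring.
Qed.

Variable s : algC.
Hypothesis hs : s ^+ 2 = 2.

Definition evalK (x : Kc) : algC := let: (a,b,k) := x in (evalV a + evalV b * s) / 2 ^+ k.

Lemma two_neq0 : (2 : algC) != 0. Proof. by rewrite pnatr_eq0. Qed.
Lemma two_exp_neq0 k : (2 : algC) ^+ k != 0. Proof. by rewrite expf_neq0 // two_neq0. Qed.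

Lemma evalK_normrec f a b k : evalK (knorm_rec f a b k) = evalK (a, b, k).
Proof.
elim: f a b k => [|f IH] a b [|k] //=.
case: ifP => // /andP[ea eb]; rewrite IH /=.
rewrite [evalV a](evalV_half ea) [evalV b](evalV_half eb) exprS.
have := two_neq0; have := two_exp_neq0 k; move=> h1 h2; by field.
Qed.

Lemma evalK_norm x : evalK (knorm x) = evalK x.
Proof. by case: x => [[a b] k]; rewrite /knorm evalK_normrec. Qed.

Lemma evalK_mul x y : evalK (kmul x y) = evalK x * evalK y.
Proof.
case: x => [[a b] k]; case: y => [[a' b'] k']; rewrite /kmul evalK_norm /=.
have h1 := two_exp_neq0 k; have h2 := two_exp_neq0 k'.
rewrite !evalV_add !evalV_scale !evalV_mul phiZ2 exprD -hs.
move: h1 h2; rewrite -hs => h1 h2.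
by field; rewrite h1 h2.
Qed.

Lemma evalK_add x y : evalK (kadd x y) = evalK x + evalK y.
Proof.
case: x => [[a b] k]; case: y => [[a' b'] k']; rewrite /kadd evalK_norm /=.
rewrite !evalV_add !evalV_scale !phiZ_p2 exprD.
have h1 := two_exp_neq0 k; have h2 := two_exp_neq0 k'.
by field; rewrite h1 h2.
Qed.

Lemma evalK_neg x : evalK (kneg x) = - evalK x.
Proof.
case: x => [[a b] k]; rewrite /= !evalV_scale phiZm1; ring.
Qed.

Lemma evalK_sub x y : evalK (ksub x y) = evalK x - evalK y.
Proof. by rewrite /ksub evalK_add evalK_neg. Qed.

Lemma evalK_k0 : evalK k0 = 0.
Proof. rewrite /= !phiZ0 expr0 invr1; ring. Qed.
Lemma evalK_k1 : evalK k1 = 1.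
Proof. rewrite /= !phiZ0 phiZ1 expr0 invr1; ring. Qed.

End EvalV.

Close Scope ring_scope.
Import Order.TTheory GRing.Theory Num.Theory.
Open Scope ring_scope.

Lemma phi18_of (y : algC) : y ^+ 9 = -1 -> y ^+ 3 != -1 -> y ^+ 6 = y ^+ 3 - 1.
Proof.
move=> y9 y3.
have : (y ^+ 3 + 1) * (y ^+ 6 - y ^+ 3 + 1) = 0.
  have -> : (y ^+ 3 + 1) * (y ^+ 6 - y ^+ 3 + 1) = y ^+ 9 + 1 by ring.
  by rewrite y9 addNr.
move/eqP; rewrite mulf_eq0 => /orP[|/eqP h].
  by rewrite addr_eq0 (negbTE y3).
by apply/eqP; rewrite -subr_eq0; apply/eqP; rewrite -h; ring.
Qed.

Definition tvec (k : nat) : V6 := vadd v1 (vscale (Zneg xH) (vadd (vz k) (vz (18 - k)))).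
Lemma cubic_comp : vmul (tvec 1) (vmul (tvec 5) (tvec 7)) = (Zneg 3, Z0, Z0, Z0, Z0, Z0).
Proof. by vm_compute. Qed.

Lemma norm1_conj (c : algC) : `|c| = 1 -> c^* = c^-1.
Proof. by move=> nc; rewrite invC_norm nc expr1n invr1 mul1r. Qed.

Lemma odd_pow_m1 (k : nat) : odd k -> (-1 : algC) ^+ k = -1.
Proof. by move=> ok; rewrite -signr_odd ok expr1. Qed.

Lemma exists_w : exists2 w : algC, w ^+ 9 = -1 & (0 <= 'Im w) && (1 < w + w^*).
Proof.
have [y py] := C_prim_root_exists (isT : (0 < 18)%N).
have y18 : y ^+ 18 = 1 := prim_expr_order py.
have y9n1 : y ^+ 9 != 1 by rewrite -(prim_order_dvd py).
have y9 : y ^+ 9 = -1.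
  have : (y ^+ 9) ^+ 2 == 1 by rewrite -exprM y18.
  by rewrite sqrf_eq1 (negbTE y9n1) => /eqP.
have y3 : y ^+ 3 != -1.
  apply/eqP => h; have : y ^+ 6 == 1 by rewrite (exprM y 3 2) h sqrrN expr1n.
  by rewrite -(prim_order_dvd py).
have hy := phi18_of y9 y3.
have ny : `|y| = 1.
  have : `|y| ^+ 18 == 1 by rewrite -normrX y18 normr1.
  by rewrite pexpr_eq1 // => /eqP.
have cj k : (k <= 18)%N -> (y ^+ k)^* = y ^+ (18 - k).
  move=> hk; rewrite norm1_conj; last by rewrite normrX ny expr1n.
  by apply: mulr1_eq; rewrite -exprD subnKC.
have ev k : (k <= 18)%N -> evalV y (tvec k) = 1 - (y ^+ k + (y ^+ k)^*).
  move=> hk; rewrite /tvec evalV_add evalV_scale evalV_add !evalV_vz // evalV_v1 // phiZm1.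
  by rewrite cj // mulN1r.
have prod3 : (1 - (y + y^*)) * ((1 - (y ^+ 5 + (y ^+ 5)^*)) * (1 - (y ^+ 7 + (y ^+ 7)^*)))
   = -3.
  rewrite -[y in 1 - (y + _)]expr1 -!ev // -!evalV_mul // cubic_comp /= phiZ0.
  rewrite /phiZ /=; ring.
have rl k : y ^+ k + (y ^+ k)^* \is Num.real.
  have -> : y ^+ k + (y ^+ k)^* = 'Re (y ^+ k) * 2.
    by rewrite ReE mulfVK // pnatr_eq0.
  by rewrite rpredM ?Creal_Re // realn.
have [k [kodd k18 hk]] : exists k, [/\ odd k, (k <= 18)%N & 1 < y ^+ k + (y ^+ k)^*].
  have c1 := rl 1%N; have c5 := rl 5%N; have c7 := rl 7%N.
  rewrite expr1 in c1.
  case: (boolP (1 < y + y^*)) => [h1|n1]; first by exists 1%N; rewrite expr1.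
  case: (boolP (1 < y ^+ 5 + (y ^+ 5)^*)) => [h5|n5]; first by exists 5%N.
  case: (boolP (1 < y ^+ 7 + (y ^+ 7)^*)) => [h7|n7]; first by exists 7%N.
  exfalso.
  rewrite real_ltNge ?realn // negbK -subr_ge0 in n1.
  rewrite real_ltNge ?realn // negbK -subr_ge0 in n5.
  rewrite real_ltNge ?realn // negbK -subr_ge0 in n7.
  have : 0 <= (1 - (y + y^*)) * ((1 - (y ^+ 5 + (y ^+ 5)^*)) * (1 - (y ^+ 7 + (y ^+ 7)^*))).
    by rewrite !mulr_ge0.
  by rewrite prod3 oppr_ge0 lern0.
have yk9 : (y ^+ k) ^+ 9 = -1 by rewrite -exprM mulnC exprM y9 odd_pow_m1.
have imr : 'Im (y ^+ k) \is Num.real by exact: Creal_Im.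
case: (boolP (0 <= 'Im (y ^+ k))) => [him|him].
  by exists (y ^+ k) => //; rewrite him hk.
exists (y ^+ k)^*.
  by rewrite -rmorphXn yk9 rmorphN1.
rewrite conjCK addrC hk andbT Im_conj oppr_ge0.
by have := real_leVge imr (real0 _); rewrite (negbTE him) orbF.
Qed.

Lemma zeta9 : zeta ^+ 9 = -1.
Proof. exact: (@rootCK _ 9 isT (-1)). Qed.

Lemma zeta3 : zeta ^+ 3 != -1.
Proof.
have [w w9 /andP[imw hw]] := exists_w.
have hmax := @rootC_Re_max _ 9 (-1) w isT w9 imw.
have hz : 1 < zeta + zeta^*.
  apply: (lt_le_trans hw); move: hmax; rewrite !ReE ler_pM2r // invr_gt0 ltr0n //.
apply/negP => /eqP h3.
have nz : `|zeta| = 1.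
  have : `|zeta| ^+ 9 == 1 by rewrite -normrX zeta9 normrN1.
  by rewrite pexpr_eq1 // => /eqP.
have cz : zeta^* = zeta^-1 := norm1_conj nz.
have z0 : zeta != 0 by apply/eqP => z0; rewrite z0 normr0 in nz; move/eqP: nz; rewrite eq_sym oner_eq0.
have : (zeta + 1) * (zeta ^+ 2 - zeta + 1) = 0.
  have -> : (zeta + 1) * (zeta ^+ 2 - zeta + 1) = zeta ^+ 3 + 1 by ring.
  by rewrite h3 addNr.
move/eqP; rewrite mulf_eq0 => /orP[|/eqP h2].
  rewrite addr_eq0 => /eqP zm1; move: hz; rewrite zm1 rmorphN1 -mulr2n mulNrn.
  move=> /(lt_trans ltr01); rewrite oppr_gt0 => h.
  by have := lt_trans h (ltr0n _ 2); rewrite ltxx.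
have : zeta + zeta^* = 1.
  rewrite cz; apply: (mulfI z0); rewrite mulrDr mulfV // mulr1.
  by apply/eqP; rewrite -subr_eq0; apply/eqP; rewrite -h2; ring.
by move=> e; rewrite e ltxx in hz.
Qed.

Lemma zeta6 : zeta ^+ 6 = zeta ^+ 3 - 1.
Proof. exact: phi18_of zeta9 zeta3. Qed.

Lemma sqrt2K : sqrtC 2 ^+ 2 = 2 :> algC.
Proof. exact: sqrtCK. Qed.

Close Scope ring_scope.
Import Order.TTheory GRing.Theory Num.Theory.
Open Scope ring_scope.

Definition ek (x : Kc) : algC := evalK zeta (sqrtC 2) x.
Lemma ek_add x y : ek (kadd x y) = ek x + ek y. Proof. exact: evalK_add. Qed.
Lemma ek_mul x y : ek (kmul x y) = ek x * ek y. Proof. exact: (evalK_mul zeta6 sqrt2K). Qed.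
Lemma ek_neg x : ek (kneg x) = - ek x. Proof. exact: evalK_neg. Qed.
Lemma ek_sub x y : ek (ksub x y) = ek x - ek y. Proof. exact: evalK_sub. Qed.
Lemma ek0 : ek k0 = 0. Proof. exact: evalK_k0. Qed.
Lemma ek1 : ek k1 = 1. Proof. exact: evalK_k1. Qed.

Arguments kadd : simpl never.
Arguments kmul : simpl never.
Arguments kneg : simpl never.
Arguments ek : simpl never.
Definition evalM (X : M3c) : M3 :=
  let: (x11,x12,x13,x21,x22,x23,x31,x32,x33) := X in
  mx3 (ek x11) (ek x12) (ek x13) (ek x21) (ek x22) (ek x23) (ek x31) (ek x32) (ek x33).

Lemma evalM_mul X Y : evalM (mmul X Y) = evalM X * evalM Y.
Proof.
case: X => [[[[[[[[x11 x12] x13] x21] x22] x23] x31] x32] x33].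
case: Y => [[[[[[[[y11 y12] y13] y21] y22] y23] y31] y32] y33].
apply/matrixP => i j; rewrite -mulmxE !mxE !big_ord_recl big_ord0 !mxE.
case: i => [[|[|[|i]]] Hi] //; case: j => [[|[|[|j]]] Hj] //=;
  rewrite !ek_add !ek_mul ek0; ring.
Qed.

Lemma evalM_Ic : evalM Ic = 1.
Proof.
apply/matrixP => i j; rewrite !mxE.
case: i => [[|[|[|i]]] Hi] //; case: j => [[|[|[|j]]] Hj] //=; rewrite ?ek0 ?ek1 //.
Qed.

Arguments vz : simpl never.
Lemma ekE a b k : ek (a, b, k) = (evalV zeta a + evalV zeta b * sqrtC 2) / 2 ^+ k.
Proof. by []. Qed.

Lemma sqrt2_neq0 : sqrtC 2 != 0 :> algC.
Proof. by rewrite sqrtC_eq0 pnatr_eq0. Qed.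

Lemma isq2E : isq2 = sqrtC 2 / 2.
Proof.
rewrite /isq2; apply: mulr1_eq.
by rewrite mulrA -expr2 sqrt2K mulfV // pnatr_eq0.
Qed.

Lemma ek_e7 : ek e7c = e7.
Proof. by rewrite /e7c ekE (evalV_vz zeta6) (evalV_v0 zeta) mul0r addr0 expr0 divr1. Qed.
Lemma ek_e4 : ek e4c = e4.
Proof. by rewrite /e4c ekE (evalV_vz zeta6) (evalV_v0 zeta) mul0r addr0 expr0 divr1. Qed.
Lemma ek_he4 : ek he4 = Defs.half * e4.
Proof. by rewrite /he4 ekE (evalV_vz zeta6) (evalV_v0 zeta) mul0r addr0 expr1 mulrC. Qed.
Lemma ek_se7 : ek se7 = isq2 * e7.
Proof.
rewrite /se7 ekE (evalV_vz zeta6) (evalV_v0 zeta) add0r expr1 isq2E /e7; ring.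
Qed.
Lemma ek_om : ek omc = omega.
Proof. by rewrite /omc ekE (evalV_vz zeta6) (evalV_v0 zeta) mul0r addr0 expr0 divr1. Qed.
Lemma ek_half : ek halfc = Defs.half.
Proof. by rewrite /halfc ekE (evalV_v1 zeta) (evalV_v0 zeta) mul0r addr0 expr1 mul1r. Qed.
Lemma ek_isq2 : ek isq2c = isq2.
Proof. by rewrite /isq2c ekE (evalV_v1 zeta) (evalV_v0 zeta) add0r expr1 mul1r isq2E. Qed.

Lemma evalM_G1 : evalM G1c = G1.
Proof. by rewrite /evalM /G1c /G1 ek0 !ek_neg ek_e7 ek_e4. Qed.
Lemma evalM_G2 : evalM G2c = G2.
Proof. by rewrite /evalM /G2c /G2 ek0 !ek_neg ek_he4 ek_se7. Qed.
Lemma evalM_H3 : evalM H3c = H3.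
Proof. by rewrite /evalM /H3c /H3 ek0 !ek_neg ek_half ek_isq2. Qed.
Lemma evalM_FUM : evalM FUMc = FUM.
Proof.
rewrite /evalM /FUMc ek0 !ek_neg ek_om /FUM /Jmx.
apply/matrixP => i j; rewrite !mxE.
case: i => [[|[|[|i]]] Hi] //; case: j => [[|[|[|j]]] Hj] //=; ring.
Qed.

Close Scope ring_scope.
Import Order.TTheory GRing.Theory Num.Theory.
Open Scope ring_scope.

Lemma minv_of (X Y : M3) : X * Y = 1 -> X^-1 = Y.
Proof.
move=> XY; have XY' : X *m Y = 1%:M by rewrite mulmxE XY.
have [Xu _] := mulmx1_unit XY'.
have Xu' : X \is a GRing.unit by [].
by rewrite -[Y]mul1r -(mulVr Xu') -mulrA XY mulr1.
Qed.

Lemma Zeqb_eq (a b : Z) : Z.eqb a b -> a = b.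
Proof. by move/Z.eqb_eq. Qed.

Lemma veqb_eq a b : veqb a b -> a = b.
Proof.
case: a => [[[[[a0 a1] a2] a3] a4] a5]; case: b => [[[[[b0 b1] b2] b3] b4] b5] /=.
by case/andP => /Zeqb_eq-> /andP[/Zeqb_eq-> /andP[/Zeqb_eq-> /andP[/Zeqb_eq-> /andP[/Zeqb_eq-> /Zeqb_eq->]]]].
Qed.
Lemma veqb_refl a : veqb a a.
Proof.
case: a => [[[[[a0 a1] a2] a3] a4] a5] /=; by rewrite !Z.eqb_refl.
Qed.
Lemma keqb_eq x y : keqb x y -> x = y.
Proof.
case: x => [[a b] k]; case: y => [[a' b'] k'] /= /and3P[/veqb_eq-> /veqb_eq-> /Nat.eqb_eq->].
by [].
Qed.
Lemma keqb_refl x : keqb x x.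
Proof. case: x => [[a b] k] /=; by rewrite !veqb_refl Nat.eqb_refl. Qed.
Lemma meqb_eq X Y : meqb X Y -> X = Y.
Proof.
case: X => [[[[[[[[x11 x12] x13] x21] x22] x23] x31] x32] x33].
case: Y => [[[[[[[[y11 y12] y13] y21] y22] y23] y31] y32] y33] /=.
case/andP => /keqb_eq-> /andP[/keqb_eq-> /andP[/keqb_eq-> /andP[/keqb_eq-> /andP[/keqb_eq->
  /andP[/keqb_eq-> /andP[/keqb_eq-> /andP[/keqb_eq-> /keqb_eq->]]]]]]].
by [].
Qed.
Lemma meqb_refl X : meqb X X.
Proof.
case: X => [[[[[[[[x11 x12] x13] x21] x22] x23] x31] x32] x33] /=.
by rewrite !keqb_refl.
Qed.
Lemma meqbE X Y : meqb X Y = (X == Y).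
Proof. by apply/idP/eqP => [/meqb_eq|->]; last exact: meqb_refl. Qed.
Lemma keqbE x y : keqb x y = (x == y).
Proof. by apply/idP/eqP => [/keqb_eq|->]; last exact: keqb_refl. Qed.
Lemma memcE x l : memc x l = (x \in l).
Proof. by elim: l => //= y l IH; rewrite in_cons meqbE IH. Qed.
Lemma memkE x l : memk x l = (x \in l).
Proof. by elim: l => //= y l IH; rewrite in_cons keqbE IH. Qed.
Lemma uniqcE l : uniqc l = uniq l.
Proof. by elim: l => //= y l IH; rewrite memcE IH. Qed.

Lemma bins_sub l i x : x \in nth [::] (bins l) i -> x \in l.
Proof.
elim: l i => [|y l IH] i.
  by change (x \in nth [::] (nseq nbins [::]) i -> x \in [::]); rewrite nth_nseq; case: ifP.
change (x \in nth [::] (set_nth [::] (bins l) (mkey y) (y :: nth [::] (bins l) (mkey y))) i -> x \in y :: l).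
rewrite nth_set_nth /=; case: eqP => [<-|_]; rewrite ?in_cons.
  by case/orP => [->//|/IH->]; rewrite orbT.
by move/IH->; rewrite orbT.
Qed.
Lemma memh_in x l : memh x (bins l) -> x \in l.
Proof. by rewrite /memh memcE => /bins_sub. Qed.

Section BFS.
Variable Q : M3c -> Prop.
Variable gs : seq M3c.
Hypothesis QI : Q Ic.
Hypothesis Qm : forall g x, g \in gs -> Q x -> Q (mmul g x).

Lemma addnew_ok c acc B new : {in c, forall x, Q x} -> {in acc, forall x, Q x} ->
  {in new, forall x, Q x} ->
  {in (addnew c acc B new).1.1, forall x, Q x} /\ {in (addnew c acc B new).2, forall x, Q x}.
Proof.
elim: c acc B new => [|x c IH] acc B new hc ha hn /=; first by split.
have hc' : {in c, forall x, Q x} by move=> y yc; apply: hc; rewrite in_cons yc orbT.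
have hx : Q x by apply: hc; rewrite mem_head.
case: ifP => _; first exact: IH.
apply: IH => // y; rewrite in_cons => /orP[/eqP->//|]; [exact: ha | exact: hn].
Qed.

Lemma bfs_ok n : {in bfs gs n, forall x, Q x}.
Proof.
rewrite /bfs.
suff : {in (iter n (bstep gs) ([:: Ic], bins [:: Ic], [:: Ic])).1.1, forall x, Q x} /\
       {in (iter n (bstep gs) ([:: Ic], bins [:: Ic], [:: Ic])).2, forall x, Q x} by case.
elim: n => [|n [IH1 IH2]] /=.
  by split => x; rewrite inE => /eqP->.
move: IH1 IH2; case: (iter n _ _) => [[acc B] fr] /= IH1 IH2.
apply: addnew_ok => // x /allpairsP[[g y] /= [gin yin ->]].
by apply: Qm => //; apply: IH2.
Qed.
End BFS.

Lemma gen_list gs invs L :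
  {in L, forall x, gen (map evalM gs) (evalM x)} ->
  Ic \in L ->
  (forall x g, x \in L -> g \in gs ++ invs -> mmul g x \in L) ->
  (forall g, g \in gs -> exists2 h, h \in invs & (evalM g)^-1 = evalM h) ->
  forall y, gen (map evalM gs) y <-> y \in map evalM L.
Proof.
move=> hL hI hcl hinv y; split.
  elim => [|g x gin _ /mapP[x' x'L ->]|g x gin _ /mapP[x' x'L ->]].
  - by apply/mapP; exists Ic => //; rewrite evalM_Ic.
  - case/mapP: gin => g' g'in ->; apply/mapP; exists (mmul g' x'); last by rewrite evalM_mul.
    by apply: hcl => //; rewrite mem_cat g'in.
  - case/mapP: gin => g' g'in ->; have [h hin ->] := hinv g' g'in.
    apply/mapP; exists (mmul h x'); last by rewrite evalM_mul.
    by apply: hcl => //; rewrite mem_cat hin orbT.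
by case/mapP => x xL ->; apply: hL.
Qed.

Close Scope ring_scope.
Import Order.TTheory GRing.Theory Num.Theory.
Open Scope ring_scope.

Lemma inv_c X Y : meqb (mmul X Y) Ic -> (evalM X)^-1 = evalM Y.
Proof. by move/meqb_eq => h; apply: minv_of; rewrite -evalM_mul h evalM_Ic. Qed.

Lemma chkInv_split :
  [/\ meqb (mmul V2c V2ic) Ic, meqb (mmul V3c V3ic) Ic, meqb (mmul V4c V4ic) Ic,
   meqb (mmul G1c G1ic) Ic & [/\ meqb (mmul G2c G2ic) Ic, meqb (mmul FUMc FUMic) Ic,
   meqb (mmul G2sqc G2sqic) Ic, meqb (mmul Ac Aic) Ic & meqb (mmul Bc Bic) Ic]].
Proof.
move: chkInv => /andP[h1 /andP[h2 /andP[h3 /andP[h4 /andP[h5 /andP[h6 /andP[h7 /andP[h8 h9]]]]]]]].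
split; [exact: h1 | exact: h2 | exact: h3 | exact: h4 | split; [exact: h5 | exact: h6 | exact: h7 | exact: h8 | exact: h9]].
Qed.


Lemma iV2 : meqb (mmul V2c V2ic) Ic. Proof. case: chkInv_split => h _ _ _ _; exact: h. Qed.
Lemma iV3 : meqb (mmul V3c V3ic) Ic. Proof. case: chkInv_split => _ h _ _ _; exact: h. Qed.
Lemma iV4 : meqb (mmul V4c V4ic) Ic. Proof. case: chkInv_split => _ _ h _ _; exact: h. Qed.
Lemma iG1 : meqb (mmul G1c G1ic) Ic. Proof. case: chkInv_split => _ _ _ h _; exact: h. Qed.
Lemma iG2 : meqb (mmul G2c G2ic) Ic. Proof. case: chkInv_split => _ _ _ _ [h _ _ _ _]; exact: h. Qed.
Lemma iFUM : meqb (mmul FUMc FUMic) Ic. Proof. case: chkInv_split => _ _ _ _ [_ h _ _ _]; exact: h. Qed.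
Lemma iG2sq : meqb (mmul G2sqc G2sqic) Ic. Proof. case: chkInv_split => _ _ _ _ [_ _ h _ _]; exact: h. Qed.
Lemma iA : meqb (mmul Ac Aic) Ic. Proof. case: chkInv_split => _ _ _ _ [_ _ _ h _]; exact: h. Qed.
Lemma iB : meqb (mmul Bc Bic) Ic. Proof. case: chkInv_split => _ _ _ _ [_ _ _ _ h]; exact: h. Qed.

Lemma G1inv : G1^-1 = evalM G1ic.
Proof. rewrite -evalM_G1; exact: inv_c iG1. Qed.
Lemma G2inv : G2^-1 = evalM G2ic.
Proof. rewrite -evalM_G2; exact: inv_c iG2. Qed.
Lemma FUMinv : FUM^-1 = evalM FUMic.
Proof. rewrite -evalM_FUM; exact: inv_c iFUM. Qed.
Lemma G2sq_eval : G2 ^+ 2 = evalM G2sqc.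
Proof. by rewrite /G2sqc evalM_mul evalM_G2 expr2. Qed.
Lemma G2sqinv : (G2 ^+ 2)^-1 = evalM G2sqic.
Proof. rewrite G2sq_eval; exact: inv_c iG2sq. Qed.
Lemma A_eval : A = evalM Ac.
Proof. by rewrite /A /Ac !evalM_mul evalM_G1 evalM_G2 -expr2 G1inv. Qed.
Lemma B_eval : B = evalM Bc.
Proof. by rewrite /B /Bc !evalM_mul evalM_G1 G2sqinv. Qed.
Lemma Ainv : A^-1 = evalM Aic.
Proof. rewrite A_eval; exact: inv_c iA. Qed.
Lemma Binv : B^-1 = evalM Bic.
Proof. rewrite B_eval; exact: inv_c iB. Qed.
Lemma V2_eval : V2 = evalM V2c.
Proof. by rewrite /V2 /V2c !evalM_mul evalM_FUM !exprS expr0 mulr1. Qed.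
Lemma V3_eval : V3 = evalM V3c.
Proof. by rewrite /V3 /V3c [evalM (mmul _ G1ic)]evalM_mul [evalM (mmul G1c _)]evalM_mul evalM_G1 -V2_eval G1inv. Qed.
Lemma V4_eval : V4 = evalM V4c.
Proof. by rewrite /V4 /V4c [evalM (mmul V3c V2c)]evalM_mul -V3_eval -V2_eval. Qed.
Lemma V2inv : V2^-1 = evalM V2ic.
Proof. rewrite V2_eval; exact: inv_c iV2. Qed.
Lemma V3inv : V3^-1 = evalM V3ic.
Proof. rewrite V3_eval; exact: inv_c iV3. Qed.
Lemma V4inv : V4^-1 = evalM V4ic.
Proof. rewrite V4_eval; exact: inv_c iV4. Qed.

Section In3.
Variable T : eqType.
Lemma in3_1 (a b c : T) : a \in [:: a; b; c]. Proof. exact: mem_head. Qed.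
Lemma in3_2 (a b c : T) : b \in [:: a; b; c]. Proof. by rewrite in_cons mem_head orbT. Qed.
Lemma in3_3 (a b c : T) : c \in [:: a; b; c].
Proof. by rewrite !inE eqxx !orbT. Qed.
Lemma in2_1 (a b : T) : a \in [:: a; b]. Proof. exact: mem_head. Qed.
Lemma in2_2 (a b : T) : b \in [:: a; b]. Proof. by rewrite in_cons mem_seq1 eqxx orbT. Qed.
Lemma in3P (a b c x : T) : x \in [:: a; b; c] -> [\/ x = a, x = b | x = c].
Proof. by rewrite !in_cons in_nil orbF => /or3P[] /eqP ->; [apply: Or31|apply: Or32|apply: Or33]. Qed.
Lemma in2P (a b x : T) : x \in [:: a; b] -> x = a \/ x = b.
Proof. by rewrite !in_cons in_nil orbF => /orP[] /eqP ->; [left|right]. Qed.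
End In3.

Lemma Fr_list y : Fr y <-> y \in map evalM Lc.
Proof.
have e : [:: G1; G2; FUM] = map evalM gsF by rewrite -evalM_G1 -evalM_G2 -evalM_FUM.
rewrite /Fr e.
apply: (@gen_list _ [:: G1ic; G2ic; FUMic]).
- rewrite Lc_eq; apply: bfs_ok; first by rewrite evalM_Ic; exact: Defs.gen1.
  by move=> g x gin hx; rewrite evalM_mul; apply: Defs.genM => //; apply: map_f.
- by rewrite -memcE; vm_compute.
- move=> x g xL gin; have := allP chkF x xL; move/allP/(_ g gin).
  by rewrite BL_eq; exact: memh_in.
- move=> g /in3P[] ->.
  + by exists G1ic; [exact: in3_1 | rewrite -G1inv evalM_G1].
  + by exists G2ic; [exact: in3_2 | rewrite -G2inv evalM_G2].
  + by exists FUMic; [exact: in3_3 | rewrite -FUMinv evalM_FUM].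
Qed.

Lemma Ngrp_list y : Ngrp y <-> y \in map evalM Nc.
Proof.
have e : [:: A; B] = map evalM gsN by rewrite A_eval B_eval.
rewrite /Ngrp e.
apply: (@gen_list _ [:: Aic; Bic]).
- rewrite Nc_eq; apply: bfs_ok; first by rewrite evalM_Ic; exact: Defs.gen1.
  by move=> g x gin hx; rewrite evalM_mul; apply: Defs.genM => //; apply: map_f.
- by rewrite -memcE; vm_compute.
- move=> x g xL gin; have := allP chkN x xL; move/allP/(_ g gin).
  by rewrite memcE.
- move=> g /in2P[] ->.
  + by exists Aic; [exact: in2_1 | rewrite -Ainv A_eval].
  + by exists Bic; [exact: in2_2 | rewrite -Binv B_eval].
Qed.

Lemma S3F_list y : S3F y <-> y \in map evalM S3c.
Proof.
rewrite S3c_eq; split.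
  case=> n /Ngrp_list /mapP[n' n'in ->] hy; apply/mapP.
  case: hy => ->.
  - exists (mmul n' Ic); first by apply: allpairs_f => //; exact: in3_1.
    by rewrite evalM_mul evalM_Ic mulr1.
  - exists (mmul n' H3c); first by apply: allpairs_f => //; exact: in3_2.
    by rewrite evalM_mul evalM_H3.
  - exists (mmul n' H3sqc); first by apply: allpairs_f => //; exact: in3_3.
    by rewrite [evalM (mmul n' _)]evalM_mul /H3sqc evalM_mul evalM_H3 expr2.
case/mapP => x /allpairsP[[n h] /= [nin hin ->]] ->.
exists (evalM n); first by apply/Ngrp_list; apply: map_f.
case/in3P: hin => ->.
- by apply: Or31; rewrite evalM_mul evalM_Ic mulr1.
- by apply: Or32; rewrite evalM_mul evalM_H3.
- by apply: Or33; rewrite [evalM (mmul n _)]evalM_mul /H3sqc evalM_mul evalM_H3 expr2.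
Qed.

Close Scope ring_scope.
Import Order.TTheory GRing.Theory Num.Theory.
Open Scope ring_scope.

Lemma isratnz_ok p : isratnz p -> ek p != 0.
Proof.
case: p => [[a b] k]; case: a => [[[[[a0 a1] a2] a3] a4] a5] /=.
case/andP => na0 /andP[/Zeqb_eq-> /andP[/Zeqb_eq-> /andP[/Zeqb_eq-> /andP[/Zeqb_eq->
  /andP[/Zeqb_eq-> /veqb_eq->]]]]].
rewrite ekE (evalV_v0 zeta) mul0r addr0 /= !phiZ0 !mul0r !addr0.
rewrite mulf_eq0 invr_eq0 negb_or two_exp_neq0 andbT.
apply/negP => /eqP /phiZ_inj0 h; move: na0; by rewrite h.
Qed.

Lemma nzcert_ok d : nzcert d -> ek d != 0.
Proof.
rewrite /nzcert => /isratnz_ok; rewrite ek_mul mulf_eq0 negb_or => /andP[] //.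
Qed.

Lemma allpairs_lt_ok l v w : allpairs_lt l -> v \in l -> w \in l -> v != w ->
  nzcert (ksub v w) || nzcert (ksub w v).
Proof.
elim: l => //= u l IH /andP[hu hl].
rewrite !in_cons => /orP[/eqP->|vl] /orP[/eqP->|wl].
- by rewrite eqxx.
- by move=> _; rewrite (allP hu w wl).
- by move=> _; rewrite (allP hu v vl) orbT.
- exact: IH.
Qed.

Lemma ek_inj_Vs v w : v \in Vs -> w \in Vs -> ek v = ek w -> v = w.
Proof.
move=> vV wV e; apply/eqP; apply/negPn/negP => ne.
have := allpairs_lt_ok chkNZ vV wV ne.
case/orP => /nzcert_ok; rewrite ek_sub e subrr eqxx //.
Qed.

Lemma evalM_entry X i j :
  evalM X i j = ek (nth k0 (mentries X) (3 * i + j)).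
Proof.
case: X => [[[[[[[[x11 x12] x13] x21] x22] x23] x31] x32] x33].
rewrite /evalM mxE.
by case: i => [[|[|[|i]]] Hi] //; case: j => [[|[|[|j]]] Hj].
Qed.

Lemma mentries_inj X Y : mentries X = mentries Y -> X = Y.
Proof.
case: X => [[[[[[[[x11 x12] x13] x21] x22] x23] x31] x32] x33].
case: Y => [[[[[[[[y11 y12] y13] y21] y22] y23] y31] y32] y33] /=.
by case=> -> -> -> -> -> -> -> -> ->.
Qed.

Lemma size_mentries X : size (mentries X) = 9%N.
Proof. by case: X => [[[[[[[[x11 x12] x13] x21] x22] x23] x31] x32] x33]. Qed.

Lemma evalM_inj_V X Y : all (fun e => e \in Vs) (mentries X) ->
  all (fun e => e \in Vs) (mentries Y) -> evalM X = evalM Y -> X = Y.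
Proof.
move=> hX hY e; apply: mentries_inj.
apply: (@eq_from_nth _ k0); first by rewrite !size_mentries.
move=> n; rewrite size_mentries => n9.
have ij : n = (3 * (n %/ 3) + n %% 3)%N by rewrite mulnC -divn_eq.
have i3 : (n %/ 3 < 3)%N by rewrite ltn_divLR.
have j3 : (n %% 3 < 3)%N by rewrite ltn_mod.
have := congr1 (fun M : M3 => M (Ordinal i3) (Ordinal j3)) e.
rewrite /= !evalM_entry /= -ij => h.
apply: ek_inj_Vs h; [apply: (allP hX) | apply: (allP hY)]; by apply: mem_nth; rewrite size_mentries.
Qed.

Lemma Lc_entries X : X \in Lc -> all (fun e => e \in Vs) (mentries X).
Proof.
move=> XL; have := allP chkV X XL.
by move=> h; apply/allP => e ein; rewrite -memkE; apply: (allP h).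
Qed.

Lemma evalM_inj_Lc X Y : X \in Lc -> Y \in Lc -> evalM X = evalM Y -> X = Y.
Proof. by move=> /Lc_entries hX /Lc_entries hY; apply: evalM_inj_V. Qed.

Lemma uniq_evalM L : uniq L -> {subset L <= Lc} -> uniq (map evalM L).
Proof.
move=> uL sL; rewrite map_inj_in_uniq // => x y xL yL.
by apply: evalM_inj_Lc; apply: sL.
Qed.

Lemma mem_evalM L X : {subset L <= Lc} -> X \in Lc -> (evalM X \in map evalM L) = (X \in L).
Proof.
move=> sL XL; apply/mapP/idP => [[Y YL e]|XL']; last by exists X.
by rewrite (evalM_inj_Lc XL (sL Y YL) e).
Qed.

Close Scope ring_scope.
Import Order.TTheory GRing.Theory Num.Theory.
Open Scope ring_scope.

Lemma gen_mul S x y : gen S x -> gen S y -> gen S (x * y).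
Proof.
elim => [|g x' gin _ IH|g x' gin _ IH] hy; first by rewrite mul1r.
- by rewrite -mulrA; apply: Defs.genM => //; apply: IH.
- by rewrite -mulrA; apply: Defs.genV => //; apply: IH.
Qed.

Lemma unit_of (X Y : M3) : X * Y = 1 -> X \is a GRing.unit.
Proof.
move=> XY; have XY' : X *m Y = 1%:M by rewrite mulmxE XY.
by have [Xu _] := mulmx1_unit XY'.
Qed.

Lemma gen_inv S x : {in S, forall g, g \is a GRing.unit} -> gen S x ->
  x \is a GRing.unit /\ gen S x^-1.
Proof.
move=> hS; elim => [|g x' gin _ [xu IH]|g x' gin _ [xu IH]].
- by rewrite invr1; split; [exact: unitr1 | exact: Defs.gen1].
- have gu := hS g gin; split; first by rewrite unitrMl.
  rewrite invrM //; apply: gen_mul IH _.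
  by rewrite -[g^-1]mulr1; apply: Defs.genV => //; exact: Defs.gen1.
- have gu := hS g gin; split; first by rewrite unitrMl // unitrV.
  rewrite invrM ?unitrV // invrK; apply: gen_mul IH _.
  by rewrite -[g]mulr1; apply: Defs.genM => //; exact: Defs.gen1.
Qed.

Lemma Fr_units : {in [:: G1; G2; FUM], forall g, g \is a GRing.unit}.
Proof.
move=> g /in3P[] ->.
- by apply: (@unit_of _ (evalM G1ic)); rewrite -G1inv mulrV //; apply: (@unit_of _ (evalM G1ic));
    rewrite -evalM_G1 -evalM_mul (meqb_eq iG1) evalM_Ic.
- by apply: (@unit_of _ (evalM G2ic)); rewrite -evalM_G2 -evalM_mul (meqb_eq iG2) evalM_Ic.
- by apply: (@unit_of _ (evalM FUMic)); rewrite -evalM_FUM -evalM_mul (meqb_eq iFUM) evalM_Ic.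
Qed.

Lemma Fr1 : Fr 1. Proof. exact: Defs.gen1. Qed.
Lemma FrM x y : Fr x -> Fr y -> Fr (x * y). Proof. exact: gen_mul. Qed.
Lemma FrV x : Fr x -> Fr x^-1. Proof. by move=> h; case: (gen_inv Fr_units h). Qed.
Lemma Fr_unit x : Fr x -> x \is a GRing.unit. Proof. by move=> h; case: (gen_inv Fr_units h). Qed.

Definition FrL := map evalM Lc.
Lemma FrL_uniq : uniq FrL.
Proof. by apply: uniq_evalM => //; rewrite -uniqcE; exact: chkU. Qed.
Lemma size_Lc : size Lc = 648%N. Proof. by vm_compute. Qed.
Lemma FrL_size : size FrL = 648%N. Proof. by rewrite size_map size_Lc. Qed.
Lemma Fr_FrL x : Fr x <-> x \in FrL. Proof. exact: Fr_list. Qed.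

Lemma has_card_size (P : M3 -> Prop) n s : uniq s -> (forall x, P x <-> x \in s) ->
  has_card P n -> n = size s.
Proof.
move=> us hs [t [ut <- ht]]; apply: perm_size; apply: uniq_perm => // x.
by apply/idP/idP => h; [apply/hs/ht | apply/ht/hs].
Qed.

Lemma Fr_card : has_card Fr 648.
Proof. by exists FrL; split; [exact: FrL_uniq | exact: FrL_size | exact: Fr_FrL]. Qed.

Lemma part3 : (648`_3)%N = 81%N.
Proof. rewrite p_part. vm_compute. reflexivity. Qed.

Close Scope ring_scope.
Import Order.TTheory GRing.Theory Num.Theory.
Open Scope ring_scope.

Definition S3L := map evalM S3c.

Lemma S3c_sub : {subset S3c <= Lc}.
Proof.
move=> x xS; case/and3P: chkS3a => _ _ /allP /(_ x xS).
by rewrite BL_eq => /memh_in.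
Qed.

Lemma S3L_uniq : uniq S3L.
Proof.
apply: uniq_evalM; last exact: S3c_sub.
by case/and3P: chkS3a => u _ _; rewrite -uniqcE.
Qed.

Lemma S3L_size : size S3L = 81%N.
Proof. by rewrite size_map; case/and3P: chkS3a => _ /eqP -> _. Qed.

Lemma S3F_sub x : S3F x -> Fr x.
Proof.
move/S3F_list => /mapP[c cS ->]; apply/Fr_FrL; apply: map_f; exact: S3c_sub.
Qed.

Lemma S3F_sg : is_subgroup_of Fr S3F.
Proof.
split.
- exact: S3F_sub.
- by apply/S3F_list; rewrite -evalM_Ic; apply: map_f; rewrite -memcE; vm_compute.
- move=> x y /S3F_list/mapP[c cS ->] /S3F_list/mapP[d dS ->].
  apply/S3F_list; rewrite -evalM_mul; apply: map_f.
  by rewrite -memcE; apply: (allP (allP chkS3m c cS) d dS).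
- move=> x /S3F_list/mapP[c cS ->].
  have /hasP[d dS hd] := allP chkS3i c cS.
  by apply/S3F_list; rewrite (inv_c hd); apply: map_f.
Qed.

Lemma conj_sg (V : M3) (P : M3 -> Prop) : Fr V -> is_subgroup_of Fr P ->
  is_subgroup_of Fr (conjset V P).
Proof.
move=> FV [sub P1 PM PV]; have Vu := Fr_unit FV.
split.
- move=> x [s Ps ->]; apply: FrM; [apply: FrM => //; exact: sub | exact: FrV].
- by exists 1 => //; rewrite mulr1 mulrV.
- move=> x y [s Ps ->] [t Pt ->]; exists (s * t); first exact: PM.
  by rewrite -!mulrA (mulrA V^-1) mulVr // mul1r.
- move=> x [s Ps ->]; exists s^-1; first exact: PV.
  have su := Fr_unit (sub s Ps).
  have Vsu : V * s \is a GRing.unit by rewrite unitrMl.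
  have Viu : V^-1 \is a GRing.unit by rewrite unitrV.
  rewrite invrM // invrK invrM // mulrA.
reflexivity.
Qed.

Definition conjL (V : M3) := map (fun s => V * s * V^-1) S3L.

Lemma conjL_mem V x : conjset V S3F x <-> x \in conjL V.
Proof.
split.
  by case=> s /S3F_list sS ->; apply: (map_f (fun s => V * s * V^-1)).
by case/mapP => s sS ->; exists s => //; apply/S3F_list.
Qed.

Lemma conjL_uniq V : Fr V -> uniq (conjL V).
Proof.
move=> FV; have Vu := Fr_unit FV.
rewrite map_inj_uniq ?S3L_uniq // => s t /(congr1 (fun z => V^-1 * z * V)).
by rewrite !mulrA !mulVr // !mul1r -!mulrA !mulVr // !mulr1.
Qed.

Lemma conjL_size V : size (conjL V) = 81%N.
Proof. by rewrite size_map S3L_size. Qed.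

Lemma FrV2 : Fr V2. Proof. by apply/Fr_FrL; rewrite V2_eval; apply: map_f; rewrite -memcE; vm_compute. Qed.
Lemma FrV3 : Fr V3. Proof. by apply/Fr_FrL; rewrite V3_eval; apply: map_f; rewrite -memcE; vm_compute. Qed.
Lemma FrV4 : Fr V4. Proof. by apply/Fr_FrL; rewrite V4_eval; apply: map_f; rewrite -memcE; vm_compute. Qed.

Definition PL (i : 'I_4) : seq M3 :=
  match val i with 0 => S3L | 1 => conjL V2 | 2 => conjL V3 | _ => conjL V4 end.

Lemma I4_case (P : 'I_4 -> Prop) : P (@Ordinal 4 0 isT) -> P (@Ordinal 4 1 isT) ->
  P (@Ordinal 4 2 isT) -> P (@Ordinal 4 3 isT) -> forall i, P i.
Proof.
move=> h0 h1 h2 h3 [[|[|[|[|i]]]] Hi].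
- by rewrite (bool_irrelevance Hi isT).
- by rewrite (bool_irrelevance Hi isT).
- by rewrite (bool_irrelevance Hi isT).
- by rewrite (bool_irrelevance Hi isT).
- by exfalso; move: Hi; rewrite !ltnS ltn0.
Qed.

Lemma PL_mem i x : four_sylows i x <-> x \in PL i.
Proof.
elim/I4_case: i.
- exact: S3F_list.
- exact: conjL_mem.
- exact: conjL_mem.
- exact: conjL_mem.
Qed.

Lemma PL_uniq i : uniq (PL i).
Proof.
elim/I4_case: i.
- exact: S3L_uniq.
- exact: conjL_uniq FrV2.
- exact: conjL_uniq FrV3.
- exact: conjL_uniq FrV4.
Qed.

Lemma PL_size i : size (PL i) = 81%N.
Proof.
elim/I4_case: i.
- exact: S3L_size.
- exact: conjL_size.
- exact: conjL_size.
- exact: conjL_size.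
Qed.

Lemma four_sg i : is_subgroup_of Fr (four_sylows i).
Proof.
elim/I4_case: i.
- exact: S3F_sg.
- exact: conj_sg FrV2 S3F_sg.
- exact: conj_sg FrV3 S3F_sg.
- exact: conj_sg FrV4 S3F_sg.
Qed.

Lemma four_card i : has_card (four_sylows i) 81.
Proof. exists (PL i); split; [exact: PL_uniq | exact: PL_size | exact: PL_mem]. Qed.

Lemma PL_sub i x : x \in PL i -> x \in FrL.
Proof. by move/PL_mem => h; apply/Fr_FrL; case: (four_sg i) => s _ _ _; apply: s. Qed.

Close Scope ring_scope.
Import Order.TTheory GRing.Theory Num.Theory.
Open Scope ring_scope.

Definition Pc (i : 'I_4) : seq M3c :=
  match val i with 0 => S3c | 1 => P1c | 2 => P2c | _ => P3c end.

Lemma chkP_split :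
  [/\ has (fun x => ~~ memc x P1c) S3c, has (fun x => ~~ memc x P2c) S3c,
  has (fun x => ~~ memc x P3c) S3c, has (fun x => ~~ memc x P2c) P1c &
  [/\ has (fun x => ~~ memc x P3c) P1c, has (fun x => ~~ memc x P3c) P2c,
  all (fun x => memh x BL) P1c, all (fun x => memh x BL) P2c & all (fun x => memh x BL) P3c]].
Proof.
move: chkP => /andP[h1 /andP[h2 /andP[h3 /andP[h4 /andP[h5 /andP[h6 /andP[h7 /andP[h8 h9]]]]]]]].
split; [exact: h1 | exact: h2 | exact: h3 | exact: h4 | split; [exact: h5 | exact: h6 | exact: h7 | exact: h8 | exact: h9]].
Qed.

Lemma sub_of_all (P : seq M3c) : all (fun x => memh x BL) P -> {subset P <= Lc}.
Proof. by move=> /allP h x /h; rewrite BL_eq => /memh_in. Qed.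

Lemma Pc_sub i : {subset Pc i <= Lc}.
Proof.
case: chkP_split => _ _ _ _ [_ _ a1 a2 a3].
elim/I4_case: i.
- exact: S3c_sub.
- exact: sub_of_all a1.
- exact: sub_of_all a2.
- exact: sub_of_all a3.
Qed.

Lemma conj_eval Vc Vic V s : V = evalM Vc -> V^-1 = evalM Vic ->
  evalM (mmul (mmul Vc s) Vic) = V * evalM s * V^-1.
Proof.
move=> -> ->.
by rewrite [evalM (mmul _ Vic)]evalM_mul [evalM (mmul Vc s)]evalM_mul.
Qed.

Lemma PL_Pc i : PL i = map evalM (Pc i).
Proof.
elim/I4_case: i.
- by [].
- change (conjL V2 = map evalM P1c); rewrite P1c_eq /conjL /S3L -!map_comp; apply: eq_map => s /=.
  by rewrite (conj_eval s V2_eval V2inv).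
- change (conjL V3 = map evalM P2c); rewrite P2c_eq /conjL /S3L -!map_comp; apply: eq_map => s /=.
  by rewrite (conj_eval s V3_eval V3inv).
- change (conjL V4 = map evalM P3c); rewrite P3c_eq /conjL /S3L -!map_comp; apply: eq_map => s /=.
  by rewrite (conj_eval s V4_eval V4inv).
Qed.

Lemma nss i j : has (fun x => ~~ memc x (Pc j)) (Pc i) ->
  ~ same_set (four_sylows i) (four_sylows j).
Proof.
move=> /hasP[c ci nc] h.
have : evalM c \in PL j.
  by apply/PL_mem/h/PL_mem; rewrite PL_Pc; apply: map_f.
by rewrite PL_Pc (mem_evalM (@Pc_sub j) (Pc_sub ci)) -memcE (negbTE nc).
Qed.

Lemma nss_sym i j : has (fun x => ~~ memc x (Pc j)) (Pc i) ->
  ~ same_set (four_sylows j) (four_sylows i).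
Proof. by move=> /nss h h'; apply: h => x; split => /h'. Qed.

Definition o0 := @Ordinal 4 0 isT.
Definition o1 := @Ordinal 4 1 isT.
Definition o2 := @Ordinal 4 2 isT.
Definition o3 := @Ordinal 4 3 isT.

Lemma four_distinct i j : same_set (four_sylows i) (four_sylows j) -> i = j.
Proof.
case: chkP_split => h01 h02 h03 h12 [h13 h23 _ _ _].
elim/I4_case: i; elim/I4_case: j; move=> h; try reflexivity; exfalso;
  first [ exact: (@nss o0 o1 h01 h) | exact: (@nss_sym o0 o1 h01 h) | exact: (@nss o0 o2 h02 h)
        | exact: (@nss_sym o0 o2 h02 h)
        | exact: (@nss o0 o3 h03 h) | exact: (@nss_sym o0 o3 h03 h) | exact: (@nss o1 o2 h12 h)
        | exact: (@nss_sym o1 o2 h12 h)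
        | exact: (@nss o1 o3 h13 h) | exact: (@nss_sym o1 o3 h13 h) | exact: (@nss o2 o3 h23 h)
        | exact: (@nss_sym o2 o3 h23 h)].
Qed.

Close Scope ring_scope.
Import Order.TTheory GRing.Theory Num.Theory.

Definition gT : Type := seq_sub FrL.
HB.instance Definition _ := Finite.on gT.

Lemma FrL1 : (1%R : M3) \in FrL. Proof. exact/Fr_FrL/Fr1. Qed.
Definition oneT : gT := SeqSub FrL1.
Definition mulT (x y : gT) : gT := insubd oneT (ssval x * ssval y)%R.
Definition invT (x : gT) : gT := insubd oneT (ssval x)^-1%R.

Lemma valM (x y : gT) : ssval (mulT x y) = (ssval x * ssval y)%R.
Proof.
rewrite /mulT insubdK //; apply/Fr_FrL; apply: FrM; apply/Fr_FrL; exact: ssvalP.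
Qed.
Lemma valV (x : gT) : ssval (invT x) = (ssval x)^-1%R.
Proof.
rewrite /invT insubdK //; apply/Fr_FrL; apply: FrV; apply/Fr_FrL; exact: ssvalP.
Qed.

Lemma mulTA : associative mulT.
Proof. by move=> x y z; apply: val_inj; rewrite /= !valM mulrA. Qed.
Lemma mul1T : left_id oneT mulT.
Proof. by move=> x; apply: val_inj; rewrite /= valM mul1r. Qed.
Lemma mulVT : left_inverse oneT invT mulT.
Proof.
move=> x; apply: val_inj; rewrite /= valM valV mulVr //.
apply: Fr_unit; apply/Fr_FrL; exact: ssvalP.
Qed.

HB.instance Definition _ := Finite_isGroup.Build gT mulTA mul1T mulVT.

Lemma gval1 : ssval (1%g : gT) = 1%R. Proof. by []. Qed.
Lemma gvalM (x y : gT) : ssval (x * y)%g = (ssval x * ssval y)%R. Proof. exact: valM. Qed.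

Lemma card_gT : #|[set: gT]| = 648.
Proof. by rewrite cardsT card_seq_sub ?FrL_uniq // FrL_size. Qed.

Definition valset (t : seq M3) : {set gT} := [set x : gT | ssval x \in t].

Lemma card_valset (t : seq M3) : uniq t -> {subset t <= FrL} -> #|valset t| = size t.
Proof.
move=> ut st.
have e : valset t =i (pmap insub t : seq gT).
  by move=> x; rewrite inE mem_pmap_sub.
rewrite (eq_card e).
have /card_uniqP -> : uniq (pmap insub t : seq gT) by apply: pmap_sub_uniq.
rewrite size_pmap_sub -[RHS](count_predT t); apply: eq_in_count => x xt /=.
exact: st.
Qed.

Lemma valset_group (P : M3 -> Prop) t : is_subgroup_of Fr P -> (forall x, P x <-> x \in t) ->
  group_set (valset t).
Proof.
move=> [sub P1 PM PV] ht; apply/group_setP; split.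
  by rewrite inE gval1; apply/ht.
move=> x y; rewrite !inE => /ht hx /ht hy; rewrite gvalM; apply/ht; exact: PM.
Qed.

Lemma valsetP (t : seq M3) (x : M3) : {subset t <= FrL} ->
  x \in t <-> exists2 u : gT, u \in valset t & ssval u = x.
Proof.
move=> st; split.
  move=> xt; have xF := st x xt.
  exists (SeqSub xF) => //; by rewrite inE.
by case=> u; rewrite inE => ut <-.
Qed.

Lemma arith648 n : (n %| 648)%N -> n %% 3 = 1 -> (4 <= n)%N -> n = 4.
Proof.
move=> d m l.
have nle : (n < 649)%N by rewrite ltnS dvdn_leq.
have chk : all (fun k => ~~ [&& (k %| 648)%N, k %% 3 == 1 & (4 <= k)%N] || (k == 4))
   (iota 0 649) by vm_compute.
have := allP chk n; rewrite mem_iota leq0n add0n nle => /(_ isT).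
by rewrite d m l eqxx /= => /eqP.
Qed.

Import Order.TTheory GRing.Theory Num.Theory.
Open Scope group_scope.

Definition Pset (i : 'I_4) : {set gT} := valset (PL i).
Lemma Pset_group i : group_set (Pset i).
Proof. exact: valset_group (four_sg i) (PL_mem i). Qed.
Definition Pgrp (i : 'I_4) : {group gT} := Group (Pset_group i).

Lemma card_Pset i : #|Pset i| = 81.
Proof. by rewrite card_valset ?PL_uniq ?PL_size //; exact: PL_sub. Qed.

Lemma Pgrp_syl i : Pgrp i \in 'Syl_3([set: gT]).
Proof. by rewrite inE pHallE subsetT /= card_Pset card_gT part3. Qed.

Lemma Pgrp_inj : injective Pgrp.
Proof.
move=> i j e; have es : Pset i = Pset j by have := congr1 (@gval gT) e.
apply: four_distinct => x; split => /PL_mem h; apply/PL_mem.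
- have [u uin <-] := (valsetP x (@PL_sub i)).1 h.
  by move: uin; rewrite /Pset in es; rewrite es inE.
- have [u uin <-] := (valsetP x (@PL_sub j)).1 h.
  by move: uin; rewrite /Pset in es; rewrite -es inE.
Qed.

Lemma syl_sub : Pgrp @: [set: 'I_4] \subset 'Syl_3([set: gT]).
Proof. by apply/subsetP => P /imsetP[i _ ->]; exact: Pgrp_syl. Qed.

Lemma card_img : #|Pgrp @: [set: 'I_4]| = 4.
Proof. by rewrite card_imset ?cardsT ?card_ord //; exact: Pgrp_inj. Qed.

Lemma syl_card : #|'Syl_3([set: gT])| = 4.
Proof.
apply: arith648.
- by rewrite -card_gT card_Syl_dvd.
- by apply: card_Syl_mod.
- by rewrite -card_img subset_leq_card // syl_sub.
Qed.

Lemma syl_eq : 'Syl_3([set: gT]) = Pgrp @: [set: 'I_4].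
Proof. by apply/eqP; rewrite eq_sym eqEcard syl_sub syl_card card_img. Qed.

Lemma main_iff (H : M3 -> Prop) :
  is_Sylow 3 Fr H <-> exists i : 'I_4, same_set H (four_sylows i).
Proof.
split.
- case=> sg [nG [nH [cG cH e]]].
  have nG648 : nG = 648 by rewrite (has_card_size FrL_uniq Fr_FrL cG) FrL_size.
  case: cH => s [us ss hs].
  have sF : {subset s <= FrL}.
    by move=> x xs; apply/Fr_FrL; case: sg => sub _ _ _; apply: sub; apply/hs.
  have HG := valset_group sg hs.
  have cHG : #|valset s| = 81 by rewrite card_valset // ss e nG648 part3.
  have : Group HG \in 'Syl_3([set: gT]).
    by rewrite inE pHallE subsetT /= cHG card_gT part3.
  rewrite syl_eq => /imsetP[i _ ei]; exists i.
  have es : valset s = Pset i by have := congr1 (@gval gT) ei.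
  move=> x; split.
  + move/hs => xs; apply/PL_mem.
    have [u uin <-] := (valsetP x sF).1 xs.
    by move: uin; rewrite es inE.
  + move/PL_mem => xp; apply/hs.
    have [u uin <-] := (valsetP x (@PL_sub i)).1 xp.
    by move: uin; rewrite /Pset in es; rewrite -es inE.
- case=> i hi; split.
  + case: (four_sg i) => sub P1 PM PV; split.
    * by move=> x /hi; apply: sub.
    * by apply/hi.
    * by move=> x y /hi hx /hi hy; apply/hi; apply: PM.
    * by move=> x /hi hx; apply/hi; apply: PV.
  + exists 648, 81; split.
    * exact: Fr_card.
    * exists (PL i); split; [exact: PL_uniq | exact: PL_size |].
      by move=> x; rewrite -PL_mem.
    * by rewrite part3.
Qed.

Close Scope group_scope.

Theorem lemma5 :
  (forall H : M3 -> Prop,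
     is_Sylow 3 Fr H <-> exists i : 'I_4, same_set H (four_sylows i)) /\
  (forall i j : 'I_4, same_set (four_sylows i) (four_sylows j) -> i = j).
Proof.
split; [exact: main_iff | exact: four_distinct].
Qed.
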